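(* For $0<p<1$ let $\Delta_p\subset\mathbf R^2$ be the quadrilateral with vertices $(0,0),(p,0),(p,1-p),(0,1)$, let $U_p=\{(a,b,c): a\mu_1+b\mu_2+c>0 \text{ on }\Delta_p\}$, and let $$E_p(a,b,c)=8\pi^2\,\frac{\left(\int_{\partial\Delta_p}(a\mu_1+b\mu_2+c)^{-2}\,d\sigma\right)^2}{\int_{\Delta_p}(a\mu_1+b\mu_2+c)^{-4}\,d\mu}$$ on $U_p/\mathbf R_+$. Then: (i) for every $0<p<1$, $\left[\left(1,0,\frac{p(1-\sqrt{1-p})}{2\sqrt{1-p}+p-2}\right)\right]$ is a critical point of $E_p$; (ii) for $\frac89<p<1$, the two points $\left[\left(-1,0,\frac{p(3p\pm\sqrt{9p^2-8p})}{2(p\pm\sqrt{9p^2-8p})}\right)\right]$ are also critical points of $E_p$; (iii) letting $0<\alpha<\beta<1$ be the real roots of $F(p)=p^4-4p^3+16p^2-16p+4$, for $0<p<\alpha$ the two points $\left[\left(p^2-4p+2\pm\sqrt{F(p)},\,\pm2\sqrt{F(p)},\,p^2+2p-2\mp\sqrt{F(p)}\right)\right]$ are also critical points of $E_p$.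
   Context: $d\mu$ is Lebesgue measure on $\Delta_p$ and $d\sigma$ is the standard boundary measure for a Delzant polytope (on each facet, $d\mu = d\sigma\wedge d\ell$ where $\ell$ is the affine function defining the facet with primitive integral inward normal). $E_p$ is invariant under positive scaling of $(a,b,c)$ and is the square of the normalized Einstein–Hilbert functional of the conformal metric $f^{-2}g$ on the toric one-point blow-up of $\mathbf{CP}^2$ with moment polytope $\Delta_p$ and $f=a\mu_1+b\mu_2+c$. *)

(* Defs.v *)
From Stdlib Require Import Reals Lra ClassicalEpsilon.
Open Scope R_scope.

(* Riemann integral of f over [a,b], made total: 0 if f is not Riemann
   integrable there.  Uses the classical (whitelisted) choice axioms. *)
Definition Rint (f : R -> R) (a b : R) : R :=
  match excluded_middle_informative (inhabited (Riemann_integrable f a b)) with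
  | left h => RiemannInt (epsilon h (fun _ => True))
  | right _ => 0
  end.

Definition inDelta (p x y : R) : Prop :=
  0 <= x <= p /\ 0 <= y /\ x + y <= 1.

Definition afff (a b c x y : R) : R := a * x + b * y + c.

Definition intDelta (p : R) (g : R -> R -> R) : R :=
  Rint (fun x => Rint (fun y => g x y) 0 (1 - x)) 0 p.

(* Integral over the boundary w.r.t. the standard Delzant boundary measure
   d sigma (d mu = d sigma /\ d l on each facet, l the defining affine
   function with primitive inward normal).  Facets:
     y = 0   (l = y,       d sigma = dx, x in [0,p]),
     x = p   (l = p - x,   d sigma = dy, y in [0,1-p]),
     x + y = 1 (l = 1-x-y, d sigma = dx, x in [0,p]),
     x = 0   (l = x,       d sigma = dy, y in [0,1]). *)
Definition intBoundary (p : R) (g : R -> R -> R) : R :=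
  Rint (fun x => g x 0) 0 p
  + Rint (fun y => g p y) 0 (1 - p)
  + Rint (fun x => g x (1 - x)) 0 p
  + Rint (fun y => g 0 y) 0 1.

Definition Ep (p a b c : R) : R :=
  8 * PI ^ 2 *
  (intBoundary p (fun x y => / (afff a b c x y) ^ 2)) ^ 2
  / intDelta p (fun x y => / (afff a b c x y) ^ 4).

(* (a,b,c) gives an admissible class: f does not vanish on Delta_p,
   i.e. (a,b,c) or -(a,b,c) lies in U_p (Delta_p is connected). *)
Definition admissible (p a b c : R) : Prop :=
  forall x y, inDelta p x y -> afff a b c x y <> 0.

Definition critical_point (p a b c : R) : Prop :=
  admissible p a b c /\
  forall u v w : R,
    derivable_pt_lim (fun t => Ep p (a + t * u) (b + t * v) (c + t * w)) 0 0.

Definition Fpoly (p : R) : R := p ^ 4 - 4 * p ^ 3 + 16 * p ^ 2 - 16 * p + 4.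

(* Main.v *)
Require Import Defs.
From Stdlib Require Import Reals Lra ClassicalEpsilon.
From Coquelicot Require Import Coquelicot.
Open Scope R_scope.

Lemma Rint_FTC (f g F : R -> R) (a b : R) : a <= b ->
  (forall x, a <= x <= b -> is_derive F x (g x)) ->
  (forall x, a <= x <= b -> continuous g x) ->
  (forall x, a <= x <= b -> f x = g x) ->
  Rint f a b = F b - F a.
Proof.
intros hab hd hc he.
assert (hI : is_RInt g a b (F b - F a)).
{ apply (is_RInt_derive F g).
  - intros x hx; apply hd; rewrite Rmin_left, Rmax_right in hx; lra.
  - intros x hx; apply hc; rewrite Rmin_left, Rmax_right in hx; lra. }
assert (hI' : is_RInt f a b (F b - F a)).
{ apply (is_RInt_ext g); [|exact hI].
  intros x hx; rewrite Rmin_left, Rmax_right in hx by lra. symmetry; apply he; lra. }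
assert (hR : Riemann_integrable f a b).
{ apply ex_RInt_Reals_0. exists (F b - F a). exact hI'. }
unfold Rint. match goal with |- context [excluded_middle_informative ?P] => destruct (excluded_middle_informative P) as [h|h] end.
- rewrite <- RInt_Reals. apply is_RInt_unique. exact hI'.
- exfalso. apply h. exact (inhabits hR).
Qed.

Definition v0 (a b c : R) := c.
Definition v1 (p a b c : R) := a*p+c.
Definition v2 (p a b c : R) := a*p+b*(1-p)+c.
Definition v3 (a b c : R) := b+c.

Lemma pos_on_Delta p a b c x y : 0 < p < 1 ->
  0 < v0 a b c -> 0 < v1 p a b c -> 0 < v2 p a b c -> 0 < v3 a b c ->
  inDelta p x y -> 0 < afff a b c x y.
Proof.
unfold v0, v1, v2, v3, inDelta, afff. intros hp h0 h1 h2 h3 [[hx1 hx2] [hy1 hy2]].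
assert (e : p*(1-x)*(a*x+b*y+c) = (1-x-y)*((p-x)*c + x*(a*p+c)) + y*((p-x)*(b+c)+x*(a*p+b*(1-p)+c))) by ring.
assert (hb : 0 < (p-x)*c + x*(a*p+c)).
{ destruct (Req_dec x 0) as [->|hx0]. nra. assert (0 < x) by lra. nra. }
assert (ht : 0 < (p-x)*(b+c)+x*(a*p+b*(1-p)+c)).
{ destruct (Req_dec x 0) as [->|hx0]. nra. assert (0 < x) by lra. nra. }
assert (hpos : 0 < p*(1-x)*(a*x+b*y+c)).
{ rewrite e. destruct (Req_dec y 0) as [->|hy0]. nra. assert (0<y) by lra. nra. }
assert (0 < p*(1-x)) by nra.
destruct (Rlt_or_le 0 (a*x+b*y+c)) as [h|h]; auto.
assert (p*(1-x)*(a*x+b*y+c) <= 0). { apply Rmult_le_0_l; lra. } lra.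
Qed.

Ltac nz := repeat match goal with |- _ * _ <> 0 => apply Rmult_integral_contrapositive_currified | |- _ ^ _ <> 0 => apply pow_nonzero | |- / _ <> 0 => apply Rinv_neq_0_compat end; try assumption; try lra.

Lemma seg_int (f : R -> R) (al be L : R) : 0 <= L ->
  (forall t, 0 <= t <= L -> al*t+be <> 0) ->
  (forall t, 0 <= t <= L -> f t = / (al*t+be)^2) ->
  Rint f 0 L = L / (be*(al*L+be)).
Proof.
intros hL hnz he.
assert (hb : be <> 0) by (generalize (hnz 0); rewrite Rmult_0_r, Rplus_0_l; intro h; apply h; lra).
rewrite (Rint_FTC f (fun t => / (al*t+be)^2) (fun t => t/(be*(al*t+be)))); auto.
- field. split; [apply hnz; lra | auto].
- intros x hx. specialize (hnz x hx). auto_derive; [apply Rmult_integral_contrapositive_currified; auto | field; auto].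
- intros x hx. specialize (hnz x hx). apply (ex_derive_continuous (K:=R_AbsRing) (V:=R_NormedModule)). auto_derive. auto.
Qed.

Lemma seg_int4 (f : R -> R) (al be L : R) : 0 <= L ->
  (forall t, 0 <= t <= L -> al*t+be <> 0) ->
  (forall t, 0 <= t <= L -> f t = / (al*t+be)^4) ->
  Rint f 0 L = L*(be^2+be*(al*L+be)+(al*L+be)^2)/(3*be^3*(al*L+be)^3).
Proof.
intros hL hnz he.
assert (hb : be <> 0) by (generalize (hnz 0); rewrite Rmult_0_r, Rplus_0_l; intro h; apply h; lra).
rewrite (Rint_FTC f (fun t => / (al*t+be)^4) (fun t => t*(be^2+be*(al*t+be)+(al*t+be)^2)/(3*be^3*(al*t+be)^3))); auto.
- field. split; [apply hnz; lra | auto].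
- intros x hx. specialize (hnz x hx). auto_derive.
  + nz.
  + field. auto.
- intros x hx. specialize (hnz x hx). apply (ex_derive_continuous (K:=R_AbsRing) (V:=R_NormedModule)). auto_derive. nz.
Qed.

Definition Tf (x y z : R) := (/x+/y+/z)*/x*/y*/z.
Definition Hq (p a b c : R) :=
  p*(1-p)/6*Tf c (a*p+c) (a*p+b*(1-p)+c) + p/6*Tf c (a*p+b*(1-p)+c) (b+c).

Lemma area_int p a b c : 0 < p < 1 ->
  (forall x y, inDelta p x y -> afff a b c x y <> 0) ->
  intDelta p (fun x y => / afff a b c x y ^ 4) = Hq p a b c.
Proof.
intros hp hnz.
assert (n0 : forall x, 0 <= x <= p -> a*x+c <> 0).
{ intros x hx. generalize (hnz x 0). unfold afff, inDelta. intro h. replace (a*x+c) with (a*x+b*0+c) by ring. apply h. lra. }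
assert (n1 : forall x, 0 <= x <= p -> a*x+b*(1-x)+c <> 0).
{ intros x hx. generalize (hnz x (1-x)). unfold afff, inDelta. intro h. apply h. lra. }
assert (n2 : c <> 0). { replace c with (a*0+c) by ring. apply n0. lra. }
assert (n3 : b+c <> 0). { replace (b+c) with (a*0+b*(1-0)+c) by ring. apply n1. lra. }
unfold intDelta.
rewrite (Rint_FTC _ (fun x => (1-x)*((a*x+c)^2+(a*x+c)*(b*(1-x)+(a*x+c))+(b*(1-x)+(a*x+c))^2)/(3*(a*x+c)^3*(b*(1-x)+(a*x+c))^3)) (fun X => Hq X a b c) 0 p); try lra.
- unfold Hq, Tf. assert (h1 : a*p+c<>0) by (apply n0; lra). assert (h2 : a*p+b*(1-p)+c<>0) by (apply n1; lra).
  field. repeat split; auto.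
- intros x hx. specialize (n0 x hx). specialize (n1 x hx). assert (n1' : a * x + b * (1 + - x) + c <> 0) by (replace (1 + - x) with (1-x) by ring; auto). unfold Hq, Tf. auto_derive.
  + repeat split; auto.
  + replace (1 + - x) with (1-x) by ring. assert (b*(1-x)+(a*x+c) <> 0) by (replace (b*(1-x)+(a*x+c)) with (a*x+b*(1-x)+c) by ring; auto). field. repeat split; auto.
- intros z hx. specialize (n0 z hx). specialize (n1 z hx).
  assert (b*(1-z)+(a*z+c) <> 0) by (replace (b*(1-z)+(a*z+c)) with (a*z+b*(1-z)+c) by ring; auto).
  apply (ex_derive_continuous (K:=R_AbsRing) (V:=R_NormedModule)). auto_derive.
  assert (b * (1 + - z) + (a * z + c) <> 0) by (replace (1 + - z) with (1-z) by ring; auto). nz.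
- intros x hx. apply seg_int4; try lra.
  + intros t ht. replace (b*t+(a*x+c)) with (afff a b c x t) by (unfold afff; ring). apply hnz. unfold inDelta. lra.
  + intros t ht. unfold afff. f_equal. f_equal. ring.
Qed.

Definition Bc (p f0 f1 f2 f3 : R) := p*/f0*/f1+(1-p)*/f1*/f2+p*/f3*/f2+/f0*/f3.
Definition Ac (p f0 f1 f2 f3 : R) := p*(1-p)/6*Tf f0 f1 f2 + p/6*Tf f0 f2 f3.

Lemma bd_int p a b c : 0 < p < 1 ->
  (forall x y, inDelta p x y -> afff a b c x y <> 0) ->
  intBoundary p (fun x y => / afff a b c x y ^ 2) = Bc p (v0 a b c) (v1 p a b c) (v2 p a b c) (v3 a b c).
Proof.
intros hp hnz.
assert (n0 : forall x, 0 <= x <= p -> a*x+c <> 0).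
{ intros x hx. generalize (hnz x 0). unfold afff, inDelta. intro h. replace (a*x+c) with (a*x+b*0+c) by ring. apply h. lra. }
assert (n1 : forall x, 0 <= x <= p -> a*x+b*(1-x)+c <> 0).
{ intros x hx. generalize (hnz x (1-x)). unfold afff, inDelta. intro h. apply h. lra. }
assert (n4 : forall y, 0 <= y <= 1-p -> b*y+(a*p+c) <> 0).
{ intros y hy. generalize (hnz p y). unfold afff, inDelta. intro h. replace (b*y+(a*p+c)) with (a*p+b*y+c) by ring. apply h. lra. }
assert (n5 : forall y, 0 <= y <= 1 -> b*y+c <> 0).
{ intros y hy. generalize (hnz 0 y). unfold afff, inDelta. intro h. replace (b*y+c) with (a*0+b*y+c) by ring. apply h. lra. }
assert (n2 : c <> 0). { replace c with (a*0+c) by ring. apply n0. lra. }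
assert (n3 : b+c <> 0). { replace (b+c) with (a*0+b*(1-0)+c) by ring. apply n1. lra. }
assert (h1 : a*p+c<>0) by (apply n0; lra). assert (h2 : a*p+b*(1-p)+c<>0) by (apply n1; lra).
unfold intBoundary.
rewrite (seg_int _ a c p); try lra.
2:{ intros t ht. apply n0. lra. }
2:{ intros t ht. unfold afff. f_equal. f_equal. ring. }
rewrite (seg_int _ b (a*p+c) (1-p)); try lra.
2:{ intros t ht. apply n4. lra. }
2:{ intros t ht. unfold afff. f_equal. f_equal. ring. }
rewrite (seg_int _ (a-b) (b+c) p); try lra.
2:{ intros t ht. replace ((a-b)*t+(b+c)) with (a*t+b*(1-t)+c) by ring. apply n1. lra. }
2:{ intros t ht. unfold afff. f_equal. f_equal. ring. }
rewrite (seg_int _ b c 1); try lra.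
2:{ intros t ht. apply n5. lra. }
2:{ intros t ht. unfold afff. f_equal. f_equal. ring. }
unfold Bc, v0, v1, v2, v3.
replace ((a-b)*p+(b+c)) with (a*p+b*(1-p)+c) by ring.
replace (b*(1-p)+(a*p+c)) with (a*p+b*(1-p)+c) by ring.
replace (b*1+c) with (b+c) by ring.
field. repeat split; auto.
Qed.

Lemma Ep_closed p a b c : 0 < p < 1 ->
  (forall x y, inDelta p x y -> afff a b c x y <> 0) ->
  Ep p a b c = 8 * PI^2 * (Bc p (v0 a b c) (v1 p a b c) (v2 p a b c) (v3 a b c))^2
     / Ac p (v0 a b c) (v1 p a b c) (v2 p a b c) (v3 a b c).
Proof.
intros hp hnz. unfold Ep. rewrite bd_int, area_int; auto.
Qed.


Lemma loc_pos (v d : R) : 0 < v -> locally 0 (fun t => 0 < v + t*d).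
Proof.
intros hv.
assert (he : 0 < v/(Rabs d + 1)). { apply Rdiv_lt_0_compat; auto. generalize (Rabs_pos d); lra. }
exists (mkposreal _ he). intros t Ht.
change (Rabs (t - 0) < v/(Rabs d + 1)) in Ht. rewrite Rminus_0_r in Ht.
assert (h1 : Rabs t * (Rabs d + 1) < v).
{ apply (Rmult_lt_compat_r (Rabs d + 1)) in Ht. 2: generalize (Rabs_pos d); lra.
  replace (v / (Rabs d + 1) * (Rabs d + 1)) with v in Ht; auto. field. generalize (Rabs_pos d); lra. }
assert (h2 : Rabs (t*d) <= Rabs t * Rabs d) by (rewrite Rabs_mult; lra).
assert (h3 : 0 <= Rabs t) by apply Rabs_pos.
generalize (Rabs_le_between' (t*d) 0 (Rabs (t*d))). intros [h4 _]. 
assert (- Rabs (t*d) <= t * d). { generalize (Rabs_pos (t*d)); intro. destruct (Rle_dec 0 (t*d)). lra. rewrite Rabs_left; lra. }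
nra.
Qed.

Definition sgn_ok p a b c :=
  (0 < v0 a b c /\ 0 < v1 p a b c /\ 0 < v2 p a b c /\ 0 < v3 a b c) \/
  (v0 a b c < 0 /\ v1 p a b c < 0 /\ v2 p a b c < 0 /\ v3 a b c < 0).

Lemma sgn_adm p a b c : 0 < p < 1 -> sgn_ok p a b c -> admissible p a b c.
Proof.
intros hp [[h0 [h1 [h2 h3]]]|[h0 [h1 [h2 h3]]]] x y hxy.
- generalize (pos_on_Delta p a b c x y hp h0 h1 h2 h3 hxy). lra.
- assert (0 < afff (-a) (-b) (-c) x y).
  { apply (pos_on_Delta p); auto; unfold v0, v1, v2, v3 in *; lra. }
  unfold afff in *. lra.
Qed.

Lemma sgn_loc p a b c u v w : sgn_ok p a b c ->
  locally 0 (fun t => sgn_ok p (a+t*u) (b+t*v) (c+t*w)).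
Proof.
intros [[h0 [h1 [h2 h3]]]|[h0 [h1 [h2 h3]]]].
- generalize (filter_and _ _ (loc_pos _ (v0 u v w) h0) (filter_and _ _ (loc_pos _ (v1 p u v w) h1)
     (filter_and _ _ (loc_pos _ (v2 p u v w) h2) (loc_pos _ (v3 u v w) h3)))).
  apply filter_imp. intros t [k0 [k1 [k2 k3]]]. left. unfold v0, v1, v2, v3 in *. repeat split; nra.
- assert (g0 : 0 < - v0 a b c) by lra. assert (g1 : 0 < - v1 p a b c) by lra.
  assert (g2 : 0 < - v2 p a b c) by lra. assert (g3 : 0 < - v3 a b c) by lra.
  generalize (filter_and _ _ (loc_pos _ (- v0 u v w) g0) (filter_and _ _ (loc_pos _ (- v1 p u v w) g1)
     (filter_and _ _ (loc_pos _ (- v2 p u v w) g2) (loc_pos _ (- v3 u v w) g3)))).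
  apply filter_imp. intros t [k0 [k1 [k2 k3]]]. right. unfold v0, v1, v2, v3 in *. repeat split; nra.
Qed.

Definition dT (x y z : R) := -(/x)^3*/y*/z - (/x+/y+/z)*(/x)^2*/y*/z.
Definition dB0 (p f0 f1 f2 f3 : R) := - p*(/f0)^2*/f1 - (/f0)^2*/f3.
Definition dB1 (p f0 f1 f2 f3 : R) := - p*/f0*(/f1)^2 - (1-p)*(/f1)^2*/f2.
Definition dB2 (p f0 f1 f2 f3 : R) := - (1-p)*/f1*(/f2)^2 - p*/f3*(/f2)^2.
Definition dB3 (p f0 f1 f2 f3 : R) := - p*(/f3)^2*/f2 - /f0*(/f3)^2.
Definition dA0 (p f0 f1 f2 f3 : R) := p*(1-p)/6*dT f0 f1 f2 + p/6*dT f0 f2 f3.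
Definition dA1 (p f0 f1 f2 f3 : R) := p*(1-p)/6*dT f1 f0 f2.
Definition dA2 (p f0 f1 f2 f3 : R) := p*(1-p)/6*dT f2 f0 f1 + p/6*dT f2 f0 f3.
Definition dA3 (p f0 f1 f2 f3 : R) := p/6*dT f3 f0 f2.

Definition Gz (p f0 f1 f2 f3 z0 z1 z2 z3 : R) :=
  2 * Ac p f0 f1 f2 f3 * (dB0 p f0 f1 f2 f3 * z0 + dB1 p f0 f1 f2 f3 * z1 + dB2 p f0 f1 f2 f3 * z2 + dB3 p f0 f1 f2 f3 * z3)
  - Bc p f0 f1 f2 f3 * (dA0 p f0 f1 f2 f3 * z0 + dA1 p f0 f1 f2 f3 * z1 + dA2 p f0 f1 f2 f3 * z2 + dA3 p f0 f1 f2 f3 * z3).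

Lemma derB p f0 f1 f2 f3 d0 d1 d2 d3 : f0 <> 0 -> f1 <> 0 -> f2 <> 0 -> f3 <> 0 ->
  is_derive (fun t => Bc p (f0+t*d0) (f1+t*d1) (f2+t*d2) (f3+t*d3)) 0
    (dB0 p f0 f1 f2 f3 * d0 + dB1 p f0 f1 f2 f3 * d1 + dB2 p f0 f1 f2 f3 * d2 + dB3 p f0 f1 f2 f3 * d3).
Proof.
intros h0 h1 h2 h3. unfold Bc, dB0, dB1, dB2, dB3.
auto_derive; rewrite ?Rmult_0_l, ?Rplus_0_r.
- repeat split; auto.
- field. auto.
Qed.

Lemma derA p f0 f1 f2 f3 d0 d1 d2 d3 : f0 <> 0 -> f1 <> 0 -> f2 <> 0 -> f3 <> 0 ->
  is_derive (fun t => Ac p (f0+t*d0) (f1+t*d1) (f2+t*d2) (f3+t*d3)) 0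
    (dA0 p f0 f1 f2 f3 * d0 + dA1 p f0 f1 f2 f3 * d1 + dA2 p f0 f1 f2 f3 * d2 + dA3 p f0 f1 f2 f3 * d3).
Proof.
intros h0 h1 h2 h3. unfold Ac, Tf, dA0, dA1, dA2, dA3, dT.
auto_derive; rewrite ?Rmult_0_l, ?Rplus_0_r.
- repeat split; auto.
- field. auto.
Qed.

Lemma Tf_pos x y z : (0 < x /\ 0 < y /\ 0 < z) \/ (x < 0 /\ y < 0 /\ z < 0) -> 0 < Tf x y z.
Proof.
unfold Tf. intros [[hx [hy hz]]|[hx [hy hz]]].
- assert (0 < /x) by (apply Rinv_0_lt_compat; auto).
  assert (0 < /y) by (apply Rinv_0_lt_compat; auto).
  assert (0 < /z) by (apply Rinv_0_lt_compat; auto).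
  repeat apply Rmult_lt_0_compat; lra.
- assert (/x < 0) by (apply Rinv_lt_0_compat; auto).
  assert (/y < 0) by (apply Rinv_lt_0_compat; auto).
  assert (/z < 0) by (apply Rinv_lt_0_compat; auto).
  assert (0 < (/x + /y + /z) * /x) by nra.
  assert (0 < /y * /z) by nra.
  replace ((/ x + / y + / z) * / x * / y * / z) with (((/ x + / y + / z) * / x) * (/ y * / z)) by ring.
  apply Rmult_lt_0_compat; auto.
Qed.

Lemma Ac_pos p a b c : 0 < p < 1 -> sgn_ok p a b c ->
  0 < Ac p (v0 a b c) (v1 p a b c) (v2 p a b c) (v3 a b c).
Proof.
intros hp hs. unfold Ac.
assert (0 < Tf (v0 a b c) (v1 p a b c) (v2 p a b c)) by (apply Tf_pos; unfold sgn_ok in hs; tauto).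
assert (0 < Tf (v0 a b c) (v2 p a b c) (v3 a b c)) by (apply Tf_pos; unfold sgn_ok in hs; tauto).
assert (0 < p*(1-p)/6) by (apply Rdiv_lt_0_compat; nra).
assert (0 < p/6) by (apply Rdiv_lt_0_compat; lra).
nra.
Qed.

Lemma veq p a b c u v w t :
  v0 (a+t*u) (b+t*v) (c+t*w) = v0 a b c + t * v0 u v w /\
  v1 p (a+t*u) (b+t*v) (c+t*w) = v1 p a b c + t * v1 p u v w /\
  v2 p (a+t*u) (b+t*v) (c+t*w) = v2 p a b c + t * v2 p u v w /\
  v3 (a+t*u) (b+t*v) (c+t*w) = v3 a b c + t * v3 u v w.
Proof. unfold v0, v1, v2, v3; repeat split; ring. Qed.

Lemma crit_core p a b c : 0 < p < 1 -> sgn_ok p a b c ->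
  Gz p (v0 a b c) (v1 p a b c) (v2 p a b c) (v3 a b c) 0 p p 0 = 0 ->
  Gz p (v0 a b c) (v1 p a b c) (v2 p a b c) (v3 a b c) 0 0 (1-p) 1 = 0 ->
  Gz p (v0 a b c) (v1 p a b c) (v2 p a b c) (v3 a b c) 1 1 1 1 = 0 ->
  critical_point p a b c.
Proof.
intros hp hs Gx Gy G1. split. { apply sgn_adm; auto. }
intros u v w. apply is_derive_Reals.
assert (hA := Ac_pos p a b c hp hs).
assert (hnz : v0 a b c <> 0 /\ v1 p a b c <> 0 /\ v2 p a b c <> 0 /\ v3 a b c <> 0).
{ unfold sgn_ok in hs; repeat split; lra. }
destruct hnz as [n0 [n1 [n2 n3]]].
set (f0 := v0 a b c) in *. set (f1 := v1 p a b c) in *. set (f2 := v2 p a b c) in *. set (f3 := v3 a b c) in *.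
set (d0 := v0 u v w). set (d1 := v1 p u v w). set (d2 := v2 p u v w). set (d3 := v3 u v w).
set (Bf := fun t => Bc p (f0+t*d0) (f1+t*d1) (f2+t*d2) (f3+t*d3)).
set (Af := fun t => Ac p (f0+t*d0) (f1+t*d1) (f2+t*d2) (f3+t*d3)).
apply (is_derive_ext_loc (fun t => 8 * PI^2 * (Bf t)^2 / Af t)).
{ generalize (sgn_loc p a b c u v w hs). apply filter_imp. intros t ht.
  rewrite Ep_closed; [|auto|apply sgn_adm; auto].
  destruct (veq p a b c u v w t) as [e0 [e1 [e2 e3]]]. rewrite e0, e1, e2, e3. reflexivity. }
assert (HB := derB p f0 f1 f2 f3 d0 d1 d2 d3 n0 n1 n2 n3).
assert (HA := derA p f0 f1 f2 f3 d0 d1 d2 d3 n0 n1 n2 n3).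
fold Bf in HB. fold Af in HA.
assert (B0 : Bf 0 = Bc p f0 f1 f2 f3) by (unfold Bf; rewrite !Rmult_0_l, !Rplus_0_r; reflexivity).
assert (A0 : Af 0 = Ac p f0 f1 f2 f3) by (unfold Af; rewrite !Rmult_0_l, !Rplus_0_r; reflexivity).
assert (HF := is_derive_scal _ _ (8*PI^2) _ (is_derive_pow Bf 2 0 _ HB)).
assert (hA0 : Af 0 <> 0) by (rewrite A0; lra).
assert (HD := is_derive_div _ _ 0 _ _ HF HA hA0).
cbv beta in HD.
match type of HD with is_derive _ _ ?l => enough (E : l = 0) by (rewrite E in HD; exact HD) end.
rewrite B0, !Rmult_0_l, !Rplus_0_r.
assert (key : 2 * Ac p f0 f1 f2 f3 * (dB0 p f0 f1 f2 f3 * d0 + dB1 p f0 f1 f2 f3 * d1 + dB2 p f0 f1 f2 f3 * d2 + dB3 p f0 f1 f2 f3 * d3)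
  - Bc p f0 f1 f2 f3 * (dA0 p f0 f1 f2 f3 * d0 + dA1 p f0 f1 f2 f3 * d1 + dA2 p f0 f1 f2 f3 * d2 + dA3 p f0 f1 f2 f3 * d3) = 0).
{ transitivity (u * Gz p f0 f1 f2 f3 0 p p 0 + v * Gz p f0 f1 f2 f3 0 0 (1-p) 1 + w * Gz p f0 f1 f2 f3 1 1 1 1).
  - unfold Gz, d0, d1, d2, d3, v0, v1, v2, v3. ring.
  - rewrite Gx, Gy, G1. ring. }
replace (INR 2) with 2 by (simpl; ring).
replace (8 * PI ^ 2 * (2 * (dB0 p f0 f1 f2 f3 * d0 + dB1 p f0 f1 f2 f3 * d1 + dB2 p f0 f1 f2 f3 * d2 + dB3 p f0 f1 f2 f3 * d3) * Bc p f0 f1 f2 f3 ^ Init.Nat.pred 2) * Ac p f0 f1 f2 f3 -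
   8 * PI ^ 2 * Bc p f0 f1 f2 f3 ^ 2 * (dA0 p f0 f1 f2 f3 * d0 + dA1 p f0 f1 f2 f3 * d1 + dA2 p f0 f1 f2 f3 * d2 + dA3 p f0 f1 f2 f3 * d3))
  with (8 * PI ^ 2 * Bc p f0 f1 f2 f3 * (2 * Ac p f0 f1 f2 f3 * (dB0 p f0 f1 f2 f3 * d0 + dB1 p f0 f1 f2 f3 * d1 + dB2 p f0 f1 f2 f3 * d2 + dB3 p f0 f1 f2 f3 * d3)
  - Bc p f0 f1 f2 f3 * (dA0 p f0 f1 f2 f3 * d0 + dA1 p f0 f1 f2 f3 * d1 + dA2 p f0 f1 f2 f3 * d2 + dA3 p f0 f1 f2 f3 * d3))) by (simpl; ring).
rewrite key. unfold Rdiv. ring.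
Qed.


Lemma case1 p : 0 < p < 1 ->
  critical_point p 1 0 (p * (1 - sqrt (1 - p)) / (2 * sqrt (1 - p) + p - 2)).
Proof.
intros hp.
assert (hs2 : sqrt (1-p) ^ 2 = 1 - p) by (rewrite <- Rsqr_pow2; apply Rsqr_sqrt; lra).
assert (hs0 : 0 < sqrt (1-p)) by (apply sqrt_lt_R0; lra).
set (s := sqrt (1-p)) in *. clearbody s.
assert (ep : p = 1 - s^2) by lra. subst p.
assert (hs1 : s < 1) by nra.
replace ((1 - s ^ 2) * (1 - s) / (2 * s + (1 - s ^ 2) - 2)) with (-(1+s)).
2:{ field. intro h. assert ((1-s)^2 = 0) by nra. nra. }
assert (e0 : v0 1 0 (-(1+s)) = -(1+s)) by (unfold v0; ring).
assert (e1 : v1 (1-s^2) 1 0 (-(1+s)) = -(s*(1+s))) by (unfold v1; ring).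
assert (e2 : v2 (1-s^2) 1 0 (-(1+s)) = -(s*(1+s))) by (unfold v2; ring).
assert (e3 : v3 1 0 (-(1+s)) = -(1+s)) by (unfold v3; ring).
assert (k1 : 0 < s*(1+s)) by nra.
apply crit_core; [lra | | | |]; rewrite ?e0, ?e1, ?e2, ?e3.
- right. repeat split; lra.
- unfold Gz, dA0, dA1, dA2, dA3, dB0, dB1, dB2, dB3, Ac, Bc, dT, Tf. field. repeat split; lra.
- unfold Gz, dA0, dA1, dA2, dA3, dB0, dB1, dB2, dB3, Ac, Bc, dT, Tf. field. repeat split; lra.
- unfold Gz, dA0, dA1, dA2, dA3, dB0, dB1, dB2, dB3, Ac, Bc, dT, Tf. field. repeat split; lra.
Qed.

Lemma case2 p : 8 / 9 < p < 1 -> forall s : R, (s = 1 \/ s = -1) ->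
  critical_point p (-1) 0
    (p * (3 * p + s * sqrt (9 * p ^ 2 - 8 * p)) / (2 * (p + s * sqrt (9 * p ^ 2 - 8 * p)))).
Proof.
intros hp s hs.
assert (hq2 : sqrt (9 * p ^ 2 - 8 * p) ^ 2 = 9 * p ^ 2 - 8 * p) by (rewrite <- Rsqr_pow2; apply Rsqr_sqrt; nra).
assert (hm2 : (s * sqrt (9 * p ^ 2 - 8 * p))^2 = 9 * p ^ 2 - 8 * p).
{ rewrite Rpow_mult_distr, hq2. destruct hs as [-> | ->]; ring. }
set (m := s * sqrt (9 * p ^ 2 - 8 * p)) in *. clearbody m.
assert (em : m = p * (m/p)) by (field; lra).
set (r := m/p) in em. clearbody r. subst m.
assert (hr : p * (9 - r^2) = 8). { apply (Rmult_eq_reg_l p); [|lra]. nra. }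
assert (hr1 : r^2 < 1) by nra.
assert (ep : p = 8/(9-r^2)) by (field_simplify_eq; [lra|nra]).
clear hm2 hq2. subst p.
assert (k0 : 0 < 1 + r) by nra. assert (k1 : 0 < 1 - r) by nra. assert (k2 : 0 < 9 - r^2) by nra.
replace (8 / (9 - r ^ 2) * (3 * (8 / (9 - r ^ 2)) + 8 / (9 - r ^ 2) * r) / (2 * (8 / (9 - r ^ 2) + 8 / (9 - r ^ 2) * r)))
  with (8*(3+r)/(2*(1+r)*(9-r^2))) by (field; lra).
assert (e0 : v0 (-1) 0 (8*(3+r)/(2*(1+r)*(9-r^2))) = 8*(3+r)/(2*(1+r)*(9-r^2))) by (unfold v0; ring).
assert (e1 : v1 (8/(9-r^2)) (-1) 0 (8*(3+r)/(2*(1+r)*(9-r^2))) = 8*(1-r)/(2*(1+r)*(9-r^2))) by (unfold v1; field; lra).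
assert (e2 : v2 (8/(9-r^2)) (-1) 0 (8*(3+r)/(2*(1+r)*(9-r^2))) = 8*(1-r)/(2*(1+r)*(9-r^2))) by (unfold v2; field; lra).
assert (e3 : v3 (-1) 0 (8*(3+r)/(2*(1+r)*(9-r^2))) = 8*(3+r)/(2*(1+r)*(9-r^2))) by (unfold v3; ring).
assert (p0 : 0 < 8*(3+r)/(2*(1+r)*(9-r^2))) by (apply Rdiv_lt_0_compat; nra).
assert (p1 : 0 < 8*(1-r)/(2*(1+r)*(9-r^2))) by (apply Rdiv_lt_0_compat; nra).
assert (hp' : 0 < 8/(9-r^2) < 1). { split. apply Rdiv_lt_0_compat; lra. apply (Rmult_lt_reg_r (9-r^2)); auto. field_simplify; lra. }
apply crit_core; [lra | | | |]; rewrite ?e0, ?e1, ?e2, ?e3.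
- left. repeat split; lra.
- unfold Gz, dA0, dA1, dA2, dA3, dB0, dB1, dB2, dB3, Ac, Bc, dT, Tf. field. repeat split; nra.
- unfold Gz, dA0, dA1, dA2, dA3, dB0, dB1, dB2, dB3, Ac, Bc, dT, Tf. field. repeat split; nra.
- unfold Gz, dA0, dA1, dA2, dA3, dB0, dB1, dB2, dB3, Ac, Bc, dT, Tf. field. repeat split; nra.
Qed.


Lemma case3_alg p r z0 z1 z2 z3 : r^2 = Fpoly p -> 0<p<1 ->
  forall f0 f1 f2 f3, f0 = p^2+2*p-2-r -> f3 = p^2+2*p-2+r ->
  f1 = p^3-3*p^2+4*p-2 + (p-1)*r -> f2 = p^3-3*p^2+4*p-2 - (p-1)*r ->
  ((z0 = 0 /\ z1 = p /\ z2 = p /\ z3 = 0) \/ (z0 = 0 /\ z1 = 0 /\ z2 = 1-p /\ z3 = 1) \/ (z0 = 1 /\ z1 = 1 /\ z2 = 1 /\ z3 = 1)) ->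
  Gz p f0 f1 f2 f3 z0 z1 z2 z3 = 0.
Proof.
intros HR Hp f0 f1 f2 f3 e0 e3 e1 e2 hz.
unfold Fpoly in HR.
assert (k03 : f0*f3 = 8*p*(1-p)^2) by (subst; replace ((p^2+2*p-2-r)*(p^2+2*p-2+r)) with ((p^2+2*p-2)^2-r^2) by ring; rewrite HR; ring).
assert (k12 : f1*f2 = 8*p*(1-p)^3) by (subst; replace ((p^3-3*p^2+4*p-2 + (p-1)*r)*(p^3-3*p^2+4*p-2 - (p-1)*r)) with ((p^3-3*p^2+4*p-2)^2-(p-1)^2*r^2) by ring; rewrite HR; ring).
assert (hp : p <> 0) by lra. assert (hq : 1-p <> 0) by lra.
assert (q2 : 0 < 8*p*(1-p)^2) by (apply Rmult_lt_0_compat; [lra| apply pow_lt; lra]).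
assert (q3 : 0 < 8*p*(1-p)^3) by (apply Rmult_lt_0_compat; [lra| apply pow_lt; lra]).
set (ip := /p). set (iq := /(1-p)).
assert (i0 : /f0 = f3*/8*ip*iq^2).
{ assert (f0 <> 0). { intro h. rewrite h in k03. lra. }
  apply (Rmult_eq_reg_l f0); auto. unfold ip, iq. rewrite Rinv_r; auto. rewrite <- !Rmult_assoc, k03. field; auto. }
assert (i3 : /f3 = f0*/8*ip*iq^2).
{ assert (f3 <> 0). { intro h. rewrite h in k03. lra. }
  apply (Rmult_eq_reg_l f3); auto. unfold ip, iq. rewrite Rinv_r; auto. rewrite <- !Rmult_assoc, (Rmult_comm f3 f0), k03. field; auto. }
assert (i1 : /f1 = f2*/8*ip*iq^3).
{ assert (f1 <> 0). { intro h. rewrite h in k12. lra. }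
  apply (Rmult_eq_reg_l f1); auto. unfold ip, iq. rewrite Rinv_r; auto. rewrite <- !Rmult_assoc, k12. field; auto. }
assert (i2 : /f2 = f1*/8*ip*iq^3).
{ assert (f2 <> 0). { intro h. rewrite h in k12. lra. }
  apply (Rmult_eq_reg_l f2); auto. unfold ip, iq. rewrite Rinv_r; auto. rewrite <- !Rmult_assoc, (Rmult_comm f2 f1), k12. field; auto. }
unfold Gz, dA0, dA1, dA2, dA3, dB0, dB1, dB2, dB3, Ac, Bc, Tf, dT.
rewrite i0, i1, i2, i3.
clear i0 i1 i2 i3. subst f0 f1 f2 f3.
  assert (pw24 : r^24 = (p ^ 4 - 4 * p ^ 3 + 16 * p ^ 2 - 16 * p + 4)^12) by (rewrite <- HR; ring).
  assert (pw23 : r^23 = (p ^ 4 - 4 * p ^ 3 + 16 * p ^ 2 - 16 * p + 4)^11 * r) by (rewrite <- HR; ring).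
  assert (pw22 : r^22 = (p ^ 4 - 4 * p ^ 3 + 16 * p ^ 2 - 16 * p + 4)^11) by (rewrite <- HR; ring).
  assert (pw21 : r^21 = (p ^ 4 - 4 * p ^ 3 + 16 * p ^ 2 - 16 * p + 4)^10 * r) by (rewrite <- HR; ring).
  assert (pw20 : r^20 = (p ^ 4 - 4 * p ^ 3 + 16 * p ^ 2 - 16 * p + 4)^10) by (rewrite <- HR; ring).
  assert (pw19 : r^19 = (p ^ 4 - 4 * p ^ 3 + 16 * p ^ 2 - 16 * p + 4)^9 * r) by (rewrite <- HR; ring).
  assert (pw18 : r^18 = (p ^ 4 - 4 * p ^ 3 + 16 * p ^ 2 - 16 * p + 4)^9) by (rewrite <- HR; ring).
  assert (pw17 : r^17 = (p ^ 4 - 4 * p ^ 3 + 16 * p ^ 2 - 16 * p + 4)^8 * r) by (rewrite <- HR; ring).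
  assert (pw16 : r^16 = (p ^ 4 - 4 * p ^ 3 + 16 * p ^ 2 - 16 * p + 4)^8) by (rewrite <- HR; ring).
  assert (pw15 : r^15 = (p ^ 4 - 4 * p ^ 3 + 16 * p ^ 2 - 16 * p + 4)^7 * r) by (rewrite <- HR; ring).
  assert (pw14 : r^14 = (p ^ 4 - 4 * p ^ 3 + 16 * p ^ 2 - 16 * p + 4)^7) by (rewrite <- HR; ring).
  assert (pw13 : r^13 = (p ^ 4 - 4 * p ^ 3 + 16 * p ^ 2 - 16 * p + 4)^6 * r) by (rewrite <- HR; ring).
  assert (pw12 : r^12 = (p ^ 4 - 4 * p ^ 3 + 16 * p ^ 2 - 16 * p + 4)^6) by (rewrite <- HR; ring).
  assert (pw11 : r^11 = (p ^ 4 - 4 * p ^ 3 + 16 * p ^ 2 - 16 * p + 4)^5 * r) by (rewrite <- HR; ring).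
  assert (pw10 : r^10 = (p ^ 4 - 4 * p ^ 3 + 16 * p ^ 2 - 16 * p + 4)^5) by (rewrite <- HR; ring).
  assert (pw9 : r^9 = (p ^ 4 - 4 * p ^ 3 + 16 * p ^ 2 - 16 * p + 4)^4 * r) by (rewrite <- HR; ring).
  assert (pw8 : r^8 = (p ^ 4 - 4 * p ^ 3 + 16 * p ^ 2 - 16 * p + 4)^4) by (rewrite <- HR; ring).
  assert (pw7 : r^7 = (p ^ 4 - 4 * p ^ 3 + 16 * p ^ 2 - 16 * p + 4)^3 * r) by (rewrite <- HR; ring).
  assert (pw6 : r^6 = (p ^ 4 - 4 * p ^ 3 + 16 * p ^ 2 - 16 * p + 4)^3) by (rewrite <- HR; ring).
  assert (pw5 : r^5 = (p ^ 4 - 4 * p ^ 3 + 16 * p ^ 2 - 16 * p + 4)^2 * r) by (rewrite <- HR; ring).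
  assert (pw4 : r^4 = (p ^ 4 - 4 * p ^ 3 + 16 * p ^ 2 - 16 * p + 4)^2) by (rewrite <- HR; ring).
  assert (pw3 : r^3 = (p ^ 4 - 4 * p ^ 3 + 16 * p ^ 2 - 16 * p + 4)^1 * r) by (rewrite <- HR; ring).
  assert (pw2 : r^2 = (p ^ 4 - 4 * p ^ 3 + 16 * p ^ 2 - 16 * p + 4)^1) by (rewrite <- HR; ring).
destruct hz as [[-> [-> [-> ->]]]|[[-> [-> [-> ->]]]|[-> [-> [-> ->]]]]].
all: ring_simplify.
all: rewrite ?pw24, ?pw23, ?pw22, ?pw21, ?pw20, ?pw19, ?pw18, ?pw17, ?pw16, ?pw15, ?pw14, ?pw13, ?pw12, ?pw11, ?pw10, ?pw9, ?pw8, ?pw7, ?pw6, ?pw5, ?pw4, ?pw3, ?pw2.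
all: unfold ip, iq; field; auto.
Qed.


Lemma Fcont : continuity (fun x => - Fpoly x).
Proof. unfold Fpoly. reg. Qed.

Lemma case3 : forall alpha beta : R,
     0 < alpha < beta /\ beta < 1 ->
     Fpoly alpha = 0 -> Fpoly beta = 0 ->
     (forall x : R, Fpoly x = 0 -> x = alpha \/ x = beta) ->
     forall p : R, 0 < p < alpha ->
     forall s : R, (s = 1 \/ s = -1) ->
       critical_point p
         (p ^ 2 - 4 * p + 2 + s * sqrt (Fpoly p))
         (s * 2 * sqrt (Fpoly p))
         (p ^ 2 + 2 * p - 2 - s * sqrt (Fpoly p)).
Proof.
intros al be [[ha hab] hb1] Fa Fb Hroots p hp s hs.
assert (hal : al <= 1/2).
{ destruct (IVT (fun x => - Fpoly x) 0 (1/2) Fcont) as [z [hz1 hz2]]; [lra|unfold Fpoly; lra|unfold Fpoly; lra|].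
  assert (Fpoly z = 0) by lra. destruct (Hroots z H); lra. }
assert (hF : 0 < Fpoly p).
{ destruct (Rlt_or_le 0 (Fpoly p)) as [h|h]; auto. exfalso.
  destruct (Req_dec (Fpoly p) 0) as [h0|h0].
  - destruct (Hroots p h0); lra.
  - destruct (IVT (fun x => - Fpoly x) 0 p Fcont) as [z [hz1 hz2]]; [lra|unfold Fpoly; lra|lra|].
    assert (Fpoly z = 0) by lra. destruct (Hroots z H); lra. }
assert (hr2 : (s * sqrt (Fpoly p))^2 = Fpoly p).
{ rewrite Rpow_mult_distr. replace (sqrt (Fpoly p) ^ 2) with (Fpoly p) by (rewrite <- Rsqr_pow2, Rsqr_sqrt; lra). destruct hs as [-> | ->]; ring. }
replace (s * 2 * sqrt (Fpoly p)) with (2 * (s * sqrt (Fpoly p))) by ring.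
set (r := s * sqrt (Fpoly p)) in *. clearbody r.
assert (hp1 : 0 < p < 1) by lra.
assert (hp2 : p^2+2*p-2 < 0) by nra.
assert (e0 : v0 (p ^ 2 - 4 * p + 2 + r) (2*r) (p ^ 2 + 2 * p - 2 - r) = p^2+2*p-2-r) by (unfold v0; ring).
assert (e3 : v3 (p ^ 2 - 4 * p + 2 + r) (2*r) (p ^ 2 + 2 * p - 2 - r) = p^2+2*p-2+r) by (unfold v3; ring).
assert (e1 : v1 p (p ^ 2 - 4 * p + 2 + r) (2*r) (p ^ 2 + 2 * p - 2 - r) = p^3-3*p^2+4*p-2 + (p-1)*r) by (unfold v1; ring).
assert (e2 : v2 p (p ^ 2 - 4 * p + 2 + r) (2*r) (p ^ 2 + 2 * p - 2 - r) = p^3-3*p^2+4*p-2 - (p-1)*r) by (unfold v2; ring).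
assert (k03 : (p^2+2*p-2-r)*(p^2+2*p-2+r) = 8*p*(1-p)^2).
{ replace ((p^2+2*p-2-r)*(p^2+2*p-2+r)) with ((p^2+2*p-2)^2-r^2) by ring. rewrite hr2. unfold Fpoly. ring. }
assert (k12 : (p^3-3*p^2+4*p-2 + (p-1)*r)*(p^3-3*p^2+4*p-2 - (p-1)*r) = 8*p*(1-p)^3).
{ replace ((p^3-3*p^2+4*p-2 + (p-1)*r)*(p^3-3*p^2+4*p-2 - (p-1)*r)) with ((p^3-3*p^2+4*p-2)^2-(p-1)^2*r^2) by ring. rewrite hr2. unfold Fpoly. ring. }
assert (q2 : 0 < 8*p*(1-p)^2) by (apply Rmult_lt_0_compat; [lra| apply pow_lt; lra]).
assert (q3 : 0 < 8*p*(1-p)^3) by (apply Rmult_lt_0_compat; [lra| apply pow_lt; lra]).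
assert (hs12 : 0 < p^2-2*p+2) by nra.
assert (hsum12 : (p^3-3*p^2+4*p-2 + (p-1)*r) + (p^3-3*p^2+4*p-2 - (p-1)*r) < 0).
{ replace ((p^3-3*p^2+4*p-2 + (p-1)*r) + (p^3-3*p^2+4*p-2 - (p-1)*r)) with (2*(p-1)*(p^2-2*p+2)) by ring. nra. }
apply crit_core; [lra | | | |]; rewrite ?e0, ?e1, ?e2, ?e3.
- right. repeat split; nra.
- apply (case3_alg p r); try reflexivity; auto; try (left; repeat split; reflexivity).
- apply (case3_alg p r); try reflexivity; auto; try (right; left; repeat split; reflexivity).
- apply (case3_alg p r); try reflexivity; auto; try (right; right; repeat split; reflexivity).
Qed.

Theorem mainTheorem5 :
  (forall p : R, 0 < p < 1 ->
     critical_point p 1 0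
       (p * (1 - sqrt (1 - p)) / (2 * sqrt (1 - p) + p - 2)))
  /\
  (forall p : R, 8 / 9 < p < 1 ->
     forall s : R, (s = 1 \/ s = -1) ->
       critical_point p (-1) 0
         (p * (3 * p + s * sqrt (9 * p ^ 2 - 8 * p))
            / (2 * (p + s * sqrt (9 * p ^ 2 - 8 * p)))))
  /\
  (forall alpha beta : R,
     0 < alpha < beta /\ beta < 1 ->
     Fpoly alpha = 0 -> Fpoly beta = 0 ->
     (forall x : R, Fpoly x = 0 -> x = alpha \/ x = beta) ->
     forall p : R, 0 < p < alpha ->
     forall s : R, (s = 1 \/ s = -1) ->
       critical_point p
         (p ^ 2 - 4 * p + 2 + s * sqrt (Fpoly p))
         (s * 2 * sqrt (Fpoly p))
         (p ^ 2 + 2 * p - 2 - s * sqrt (Fpoly p))).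
Proof.
split; [exact case1|split; [exact case2|exact case3]].
Qed.
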